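(* (1) For $\lambda\in[0,1)$, $\mathbb{L}^{>\lambda}(\mathrm{QBA}|\mathrm{D})$ is not closed under intersection. (2) For $\lambda\in[0,1)$, $\mathbb{L}^{>\lambda}(\mathrm{QBA}|\mathrm{D})$ is not closed under complementation (relative to $\Sigma^\omega$).
   Context: A quantum automaton is a tuple $\mathcal{A}=(\mathcal{H},|s_0\rangle,\Sigma,\{U_\sigma:\sigma\in\Sigma\},F)$ where $\mathcal{H}$ is a finite-dimensional complex Hilbert space, $|s_0\rangle$ a unit vector, $\Sigma$ a finite alphabet, each $U_\sigma$ unitary, and $F$ a subspace. For $w=\sigma_1\sigma_2\cdots\in\Sigma^\omega$, a unit vector $|\psi\rangle\in F$ and checkpoints $0\le n_1<n_2<\cdots$, the disturbing run is $|s_0\rangle$ and for $n\ge1$: $|s_n\rangle=U_{\sigma_n}|\psi\rangle$ if $n-1=n_i$ for some $i$, else $|s_n\rangle=U_{\sigma_n}|s_{n-1}\rangle$; $f^{\mathrm{D}}_{\mathcal{A}}(w)=\sup_{|\psi\rangle}\sup_{\{n_i\}}\inf_{i\ge1}|\langle\psi|s_{n_i}\rangle|^2$ over unit $|\psi\rangle\in F$ and strictly increasing checkpoint sequences. $\mathcal{L}^{>\lambda}(\mathcal{A}|\mathrm{D})=\{w:f^{\mathrm{D}}_{\mathcal{A}}(w)>\lambda\}$ and $\mathbb{L}^{>\lambda}(\mathrm{QBA}|\mathrm{D})$ is the class of all such languages over all quantum automata. *)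

(* Defs.v *)
From HB Require Import structures.
From mathcomp Require Import all_boot all_order all_algebra.
From mathcomp Require Import boolp classical_sets reals.
From mathcomp.real_closed Require Import complex.

Set Implicit Arguments.
Unset Strict Implicit.
Unset Printing Implicit Defensive.

Import Order.TTheory GRing.Theory Num.Theory.
Local Open Scope ring_scope.
Local Open Scope classical_set_scope.

Section QA.
Variable R : realType.

Definition adj m n (M : 'M[R[i]]_(m, n)) : 'M[R[i]]_(n, m) :=
  (map_mx (fun x : R[i] => x^*) M)^T.

Definition inner n (psi s : 'cV[R[i]]_n) : R[i] := (adj psi *m s) 0 0.

Definition sqmod (z : R[i]) : R := complex.Re z ^+ 2 + complex.Im z ^+ 2.

Definition unit_vec n (v : 'cV[R[i]]_n) : Prop := \sum_(k < n) sqmod (v k 0) = 1.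

Definition unitary n (U : 'M[R[i]]_n) : Prop := U *m adj U = 1%:M /\ adj U *m U = 1%:M.

(* A quantum automaton over the alphabet Sigma: Hilbert space C^qa_dim,
   initial unit vector qa_s0, unitaries qa_U sigma, and the subspace F given as
   the row space of the matrix qa_F; a column vector v lies in F iff (v^T <= qa_F)%MS. *)
Record qautomaton (Sigma : finType) := QAutomaton {
  qa_dim : nat;
  qa_s0 : 'cV[R[i]]_qa_dim;
  qa_U : Sigma -> 'M[R[i]]_qa_dim;
  qa_F : 'M[R[i]]_qa_dim;
  qa_s0_unit : unit_vec qa_s0;
  qa_U_unitary : forall a, unitary (qa_U a)
}.

Definition in_F Sigma (A : qautomaton Sigma) (v : 'cV[R[i]]_(qa_dim A)) : Prop :=
  (v^T <= qa_F A)%MS.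

(* infinite words sigma_1 sigma_2 ... ; sigma_n is (w n.-1) *)
Definition oword (Sigma : finType) := nat -> Sigma.

(* checkpoints n_1 < n_2 < ... ; n_i is (c i.-1) *)
Definition checkpoints (c : nat -> nat) : Prop := forall i, (c i < c i.+1)%N.

Fixpoint drun Sigma (A : qautomaton Sigma) (w : oword Sigma)
    (psi : 'cV[R[i]]_(qa_dim A)) (c : nat -> nat) (n : nat) : 'cV[R[i]]_(qa_dim A) :=
  match n with
  | 0 => qa_s0 A
  | m.+1 => qa_U A (w m) *m
              (if pselect (exists i, c i = m) then psi else @drun Sigma A w psi c m)
  end.

Definition fD Sigma (A : qautomaton Sigma) (w : oword Sigma) : R :=
  sup [set x : R | exists (psi : 'cV[R[i]]_(qa_dim A)) (c : nat -> nat),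
         [/\ in_F psi, unit_vec psi, checkpoints c &
             x = inf [set y : R | exists i : nat, y = sqmod (inner psi (@drun Sigma A w psi c (c i)))]]].

Definition langD Sigma (A : qautomaton Sigma) (lam : R) : set (oword Sigma) :=
  [set w | lam < fD A w].

Definition QBA_D (Sigma : finType) (lam : R) : set (set (oword Sigma)) :=
  [set L | exists A : qautomaton Sigma, L = langD A lam].

End QA.

Arguments QBA_D {R} Sigma lam _.
Arguments drun {R Sigma} A w psi c n.

(* Main.v *)
Require Import Defs.
From HB Require Import structures.
From mathcomp Require Import all_boot all_order all_algebra.
From mathcomp Require Import boolp classical_sets reals.
From mathcomp.real_closed Require Import complex.
From mathcomp Require Import all_fingroup.
From mathcomp Require Import ring lra zify.
Import Order.TTheory GRing.Theory Num.Theory.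
Local Open Scope complex_scope.
Local Open Scope ring_scope.
Local Open Scope classical_set_scope.
Set Implicit Arguments.
Unset Strict Implicit.
Unset Printing Implicit Defensive.
Section Alg.
Variable R : realType.
Local Notation C := (R[i]).

Definition nrm n (v : 'cV[C]_n) : R := \sum_(k < n) sqmod (v k 0).

Lemma sqmodE (z : C) : (sqmod z)%:C = z^* * z.
Proof. case: z => a b; rewrite /sqmod /=. apply/eqP; rewrite eq_complex /=; apply/andP; split; apply/eqP; ring. Qed.

Lemma sqmod_ge0 (z : C) : 0 <= sqmod z.
Proof. by rewrite /sqmod addr_ge0 ?sqr_ge0. Qed.

Lemma innerE n (p v : 'cV[C]_n) : inner p v = \sum_(k < n) (p k 0)^* * v k 0.
Proof. by rewrite /inner /adj !mxE; apply: eq_bigr => k _; rewrite !mxE. Qed.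

Lemma inner_nrm n (v : 'cV[C]_n) : inner v v = (nrm v)%:C.
Proof. rewrite innerE /nrm rmorph_sum; apply: eq_bigr => k _; exact: (esym (sqmodE _)). Qed.

Lemma nrm_ge0 n (v : 'cV[C]_n) : 0 <= nrm v.
Proof. by apply: sumr_ge0 => k _; apply: sqmod_ge0. Qed.

Lemma adjM m n p (A : 'M[C]_(m, n)) (B : 'M[C]_(n, p)) : adj (A *m B) = adj B *m adj A.
Proof. by rewrite /adj map_mxM trmx_mul. Qed.

Lemma innerU n (U : 'M[C]_n) p v : unitary U -> inner (U *m p) (U *m v) = inner p v.
Proof. by move=> [_ H]; rewrite /inner adjM mulmxA -(mulmxA (adj p)) H mulmx1. Qed.

Lemma nrmU n (U : 'M[C]_n) v : unitary U -> nrm (U *m v) = nrm v.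
Proof. by move=> H; apply: complexI; rewrite -!inner_nrm innerU. Qed.

Lemma inner_conj n (p v : 'cV[C]_n) : inner v p = (inner p v)^*.
Proof. rewrite !innerE rmorph_sum; apply: eq_bigr => k _. by rewrite rmorphM /= conjCK mulrC. Qed.

Lemma innerBr n (p v v' : 'cV[C]_n) : inner p (v - v') = inner p v - inner p v'.
Proof. by rewrite /inner mulmxBr !mxE. Qed.

Lemma innerZr n (p v : 'cV[C]_n) a : inner p (a *: v) = a * inner p v.
Proof. by rewrite /inner -scalemxAr !mxE. Qed.

Lemma innerBl n (p p' v : 'cV[C]_n) : inner (p - p') v = inner p v - inner p' v.
Proof. by rewrite (inner_conj v) innerBr rmorphB /= -!inner_conj. Qed.

Lemma innerZl n (p v : 'cV[C]_n) a : inner (a *: p) v = a^* * inner p v.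
Proof. by rewrite (inner_conj v) innerZr rmorphM /= -!inner_conj. Qed.

Lemma sub1_sqmodC (z : C) : (1 - sqmod z)%:C = 1 - z^* * z.
Proof. case: z => a b; rewrite /sqmod /=. apply/eqP; rewrite eq_complex /=; apply/andP; split; apply/eqP; ring. Qed.

Lemma CS n (p v : 'cV[C]_n) : nrm p = 1 -> nrm v = 1 -> sqmod (inner p v) <= 1.
Proof.
move=> hp hv; set z := inner p v.
have H : inner (v - z *: p) (v - z *: p) = 1 - z^* * z.
  rewrite innerBl !innerBr !innerZl !innerZr !inner_nrm hp hv.
  have hc : inner v p = z^* := inner_conj p v.
  have h1 : (1%:C : C) = 1 by [].
  rewrite hc h1 /= -/z; ring.
rewrite inner_nrm -sub1_sqmodC in H.
move: (nrm_ge0 (v - z *: p)); rewrite (complexI H); lra.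
Qed.
End Alg.
Section Rec.
Variable R : realType.
Local Notation C := (R[i]).

Lemma ReB (a b : C) : complex.Re (a - b) = complex.Re a - complex.Re b.
Proof. by case: a => ? ?; case: b. Qed.
Lemma ImB (a b : C) : complex.Im (a - b) = complex.Im a - complex.Im b.
Proof. by case: a => ? ?; case: b. Qed.

Lemma nrm_sub n (psi v : 'cV[C]_n) : nrm psi = 1 -> nrm v = 1 ->
  nrm (v - psi) = 2 - 2 * complex.Re (inner psi v).
Proof.
move=> hp hv; set z := inner psi v.
have H : inner (v - psi) (v - psi) = 2 - z - z^*.
  rewrite innerBl !innerBr !inner_nrm hp hv.
  have hc : inner v psi = z^* := inner_conj psi v.
  have h1 : (1%:C : C) = 1 by [].
  rewrite hc h1 -/z; ring.
have H2 : (2 - 2 * complex.Re z)%:C = 2 - z - z^*.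
  by case: z {H} => a b; apply/eqP; rewrite eq_complex /=; apply/andP; split; apply/eqP; ring.
by apply: complexI; rewrite -inner_nrm H H2.
Qed.

Lemma sqmod_le_nrm n (v : 'cV[C]_n) i : sqmod (v i 0) <= nrm v.
Proof.
rewrite /nrm (bigD1 i) //= lerDl; apply: sumr_ge0 => k _; exact: sqmod_ge0.
Qed.

Lemma iter_nrm n (U : 'M[C]_n) x k : unitary U -> nrm (iter k (@mulmx C n n 1 U) x) = nrm x.
Proof. by move=> hU; elim: k => //= k IH; rewrite nrmU. Qed.

Lemma iter_shift n (U : 'M[C]_n) psi k N :
  iter (k + N) (@mulmx C n n 1 U) psi - iter k (@mulmx C n n 1 U) psi =
  iter k (@mulmx C n n 1 U) (iter N (@mulmx C n n 1 U) psi - psi).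
Proof. by elim: k => //= k IH; rewrite -mulmxBr IH. Qed.

End Rec.
Section Pig.
Variable R : realType.
Local Notation C := (R[i]).

Lemma cellP (K : nat) (x y : R) : (0 < K)%N -> -1 <= x <= 1 -> -1 <= y <= 1 ->
  (inord (Num.truncn ((x + 1) * K%:R)) : 'I_(K.*2).+1) = inord (Num.truncn ((y + 1) * K%:R)) ->
  (K%:R * (y - x))^+2 < 1.
Proof.
move=> K0 /andP[hx1 hx2] /andP[hy1 hy2] E.
have hK : (1 <= K%:R :> R) by rewrite ler1n.
have bnd : forall z : R, -1 <= z <= 1 -> (Num.truncn ((z + 1) * K%:R) < (K.*2).+1)%N.
  move=> z /andP[z1 z2]; rewrite ltnS truncn_le_nat -natr1 -muln2 natrM; nra.
have E' := congr1 val E; rewrite /= !inordK ?bnd ?hx1 ?hx2 ?hy1 ?hy2 // in E'.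
have ix : 0 <= (x + 1) * K%:R by nra.
have iy : 0 <= (y + 1) * K%:R by nra.
move: (truncn_itv ix) (truncn_itv iy); rewrite E' -natr1.
set t := (Num.truncn _)%:R => /andP[a1 a2] /andP[b1 b2].
nra.
Qed.

Lemma pigeon n (f : nat -> 'cV[C]_n) (K : nat) :
  (forall k i, -1 <= complex.Re (f k i 0) <= 1 /\ -1 <= complex.Im (f k i 0) <= 1) ->
  (0 < K)%N ->
  exists k k', (k < k')%N /\ forall i,
    (K%:R * (complex.Re (f k' i 0) - complex.Re (f k i 0)))^+2 < 1 /\
    (K%:R * (complex.Im (f k' i 0) - complex.Im (f k i 0)))^+2 < 1.
Proof.
move=> hb K0.
pose cell (x : R) : 'I_(K.*2).+1 := inord (Num.truncn ((x + 1) * K%:R)).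
pose T := {ffun 'I_n * bool -> 'I_(K.*2).+1}.
pose g (k : 'I_#|T|.+1) : T := [ffun ib : 'I_n * bool =>
  if ib.2 then cell (complex.Re (f k ib.1 0)) else cell (complex.Im (f k ib.1 0))].
have : ~~ injectiveb g.
  apply/negP => /injectiveP /leq_card; rewrite card_ord ltnn //.
move/injectivePn => [k1 [k2 nk E]].
have key : forall a b : 'I_#|T|.+1, g a = g b -> forall i,
    (K%:R * (complex.Re (f b i 0) - complex.Re (f a i 0)))^+2 < 1 /\
    (K%:R * (complex.Im (f b i 0) - complex.Im (f a i 0)))^+2 < 1.
  move=> a b Eab i; have E1 := congr1 (fun h : T => h (i, true)) Eab.
  have E2 := congr1 (fun h : T => h (i, false)) Eab.
  rewrite /= !ffunE /= in E1 E2.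
  have [ha1 ha2] := hb a i; have [hb1 hb2] := hb b i.
  by split; apply: cellP.
case: (ltngtP k1 k2) => [lt|gt|eq].
- by exists k1, k2; split => //; apply: key.
- by exists k2, k1; split => //; apply: key.
- by move: nk; rewrite (val_inj eq) eqxx.
Qed.
End Pig.
Section Recur.
Variable R : realType.
Local Notation C := (R[i]).

Lemma recur n (U : 'M[C]_n) psi (lam : R) : unitary U -> nrm psi = 1 -> lam < 1 ->
  exists N, (0 < N)%N /\ lam < sqmod (inner psi (iter N (@mulmx C n n 1 U) psi)).
Proof.
move=> hU hp hl.
pose f k := iter k (@mulmx C n n 1 U) psi.
have fn : forall k, nrm (f k) = 1 by move=> k; rewrite /f iter_nrm.
have hb : forall k i, -1 <= complex.Re (f k i 0) <= 1 /\ -1 <= complex.Im (f k i 0) <= 1.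
  move=> k i; have := sqmod_le_nrm (f k) i; rewrite fn /sqmod => h.
  split; apply/andP; split; nra.
pose K := (Num.truncn ((2 * n%:R) / (1 - lam))).+1.
have [k [k' [lt H]]] := pigeon hb (ltn0Sn (Num.truncn ((2 * n%:R) / (1 - lam)))).
rewrite -/K in H.
pose N := (k' - k)%N.
have k'E : k' = (k + N)%N by rewrite /N subnKC // ltnW.
have hd : nrm (f k' - f k) = nrm (f N - psi).
  by rewrite /f k'E iter_shift iter_nrm.
have hK1 : 1 <= K%:R :> R by rewrite ler1n.
have hK2 : 2 * n%:R < K%:R * (1 - lam).
  rewrite -ltr_pdivrMr ?subr_gt0 // /K; exact: truncnS_gt.
have hsum : K%:R ^+ 2 * nrm (f k' - f k) <= 2 * n%:R.
  rewrite /nrm mulr_sumr.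
  have -> : 2 * n%:R = \sum_(i < n) (2 : R).
    by rewrite sumr_const card_ord mulr_natr.
  apply: ler_sum => i _; rewrite /sqmod !mxE ReB ImB.
  have [h1 h2] := H i; nra.
have hN : nrm (f N - psi) < 1 - lam.
  rewrite -hd.
  have hX := nrm_ge0 (f k' - f k).
  have h3 : K%:R * (1 - lam) <= K%:R ^+ 2 * (1 - lam).
    by apply: ler_wpM2r; [lra | rewrite expr2; nra].
  have h4 : K%:R ^+ 2 * nrm (f k' - f k) < K%:R ^+ 2 * (1 - lam) by lra.
  by rewrite ltr_pM2l in h4; [| rewrite exprn_gt0 //; lra].
exists N; split; first by rewrite /N subn_gt0.
move: hN; rewrite nrm_sub // ?fn // /sqmod => hN.
nra.
Qed.
End Recur.
Section TLsec.
Local Unset Implicit Arguments.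
Variable R : realType.
Local Notation C := (R[i]).
Variable Sigma : finType.
Implicit Types (A : qautomaton R Sigma) (w : oword Sigma).

Definition fidS A w psi c : set R :=
  [set y : R | exists i : nat, y = sqmod (inner psi (drun A w psi c (c i)))].

Arguments fidS : clear implicits.

Definition Fset A w : set R :=
  [set x : R | exists (psi : 'cV[R[i]]_(qa_dim A)) (c : nat -> nat),
         [/\ in_F psi, unit_vec psi, checkpoints c & x = inf (fidS A w psi c)]].

Arguments Fset : clear implicits.

Lemma fDE A w : fD A w = sup (Fset A w). Proof. by []. Qed.

Lemma drun_unit A w psi c n : unit_vec psi -> unit_vec (drun A w psi c n).
Proof.
move=> hp; elim: n => [|n IH] /=; first exact: qa_s0_unit.
rewrite /unit_vec -/(nrm _) nrmU; last exact: qa_U_unitary.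
by case: pselect.
Qed.

Lemma fid_le1 A w psi c n : unit_vec psi -> sqmod (inner psi (drun A w psi c n)) <= 1.
Proof. by move=> hp; apply: CS => //; apply: drun_unit. Qed.

Lemma fidS_lb A w psi c : has_lbound (fidS A w psi c).
Proof. by exists 0 => y [i ->]; apply: sqmod_ge0. Qed.

Lemma Fset_ub A w : ubound (Fset A w) 1.
Proof.
move=> x [psi [c [_ hp _ ->]]].
apply: le_trans (@fid_le1 A w psi c (c 0%N) hp).
by apply: (ge_inf (fidS_lb A w psi c)); exists 0%N.
Qed.

Lemma Fset_sup A w x : Fset A w x -> x <= fD A w.
Proof.
move=> hx; rewrite fDE; apply: sup_upper_bound => //; split; first by exists x.
by exists 1; apply: Fset_ub.
Qed.

Lemma chk_mono c : checkpoints c -> forall i j, (i <= j)%N -> (c i <= c j)%N.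
Proof.
move=> hc i j /subnK <-; elim: (j - i)%N => // k IH.
by rewrite addSn; apply: leq_trans IH (ltnW (hc _)).
Qed.

Lemma drun_ext A w w' psi c c' n :
  (forall k, (k < n)%N -> w k = w' k /\ ((exists i, c i = k) <-> (exists i, c' i = k))) ->
  drun A w psi c n = drun A w' psi c' n.
Proof.
elim: n => // n IH H /=.
have [hw hc] := H n (ltnSn n).
rewrite hw IH; last by move=> k hk; apply: H; apply: ltnW.
by case: pselect => h1; case: pselect => h2 //; exfalso; tauto.
Qed.

Lemma drunS A w psi c n : drun A w psi c n.+1 =
  qa_U A (w n) *m (if pselect (exists i, c i = n) then psi else drun A w psi c n).
Proof. by []. Qed.

Lemma drun_tail A w psi c p a t : (exists i, c i = p) ->
  (forall k, (p <= k <= p + t)%N -> w k = a) ->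
  (forall k, (p < k <= p + t)%N -> ~ exists i, c i = k) ->
  drun A w psi c (p + t).+1 = iter t.+1 (@mulmx C _ _ 1 (qa_U A a)) psi.
Proof.
move=> hp; elim: t => [|t IH] hw hn.
  rewrite addn0 /= (hw p); last by rewrite addn0 leqnn.
  by destruct (pselect _).
rewrite addnS drunS; destruct (pselect _) as [h|h0]; cbn iota beta delta [is_left].
  by exfalso; apply: (hn (p + t).+1) => //; lia.
rewrite (hw (p + t).+1); last lia.
rewrite IH //.
- by move=> k hk; apply: hw; lia.
- by move=> k hk; apply: hn; lia.
Qed.

Lemma TL A (lam : R) (a : Sigma) w : 0 <= lam < 1 -> lam < fD A w ->
  exists m, lam < fD A (fun n => if (n < m)%N then w n else a).
Proof.
move=> /andP[l0 l1] hf.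
have hs : has_sup (Fset A w).
  apply: contrapT => hns; move: hf; rewrite fDE sup_out //; lra.
have ep : 0 < fD A w - lam by rewrite subr_gt0.
have [x [psi [c [hF hU hc ->]]] hx] := sup_adherent ep hs.
rewrite -fDE in hx.
have hlS : lam < inf (fidS A w psi c) by lra.
have hS : forall i, inf (fidS A w psi c) <= sqmod (inner psi (drun A w psi c (c i))).
  by move=> i; apply: (ge_inf (fidS_lb A w psi c)); exists i.
have [N [N0 hN]] := recur (qa_U_unitary A a) hU l1.
exists (c 0%N).
set m := c 0%N.
set w' := fun n => if (n < m)%N then w n else a.
pose c' := fun i => (m + i * N)%N.
have hc' : checkpoints c' by move=> i; rewrite /c' mulSn; nia.
have f0 : drun A w' psi c' m = drun A w psi c m.
  apply: drun_ext => k hk; split; first by rewrite /w' hk.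
  split => -[i hi].
  - by move: hi; rewrite /c'; lia.
  - by have := chk_mono c hc 0%N i (leq0n i); rewrite hi -/m; lia.
have fi : forall i, drun A w' psi c' (c' i.+1) = iter N (@mulmx C _ _ 1 (qa_U A a)) psi.
  move=> i.
  have -> : c' i.+1 = ((m + i * N) + N.-1).+1 by rewrite /c' mulSn; lia.
  rewrite (drun_tail A w' psi c' (m + i * N) a N.-1); first by rewrite prednK.
  - by exists i.
  - by move=> k hk; rewrite /w'; case: ifP => // ?; lia.
  - move=> k hk [j hj]; move: hj hk; rewrite /c' => <-.
    case: (leqP j i) => hji.
    + have : (j * N <= i * N)%N by rewrite leq_mul2r hji orbT.
      lia.
    + have : (i.+1 * N <= j * N)%N by rewrite leq_mul2r hji orbT.
      rewrite mulSn; lia.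
set mu := Num.min (sqmod (inner psi (drun A w psi c m))) (sqmod (inner psi (iter N (@mulmx C _ _ 1 (qa_U A a)) psi))).
have hmu : lam < mu by rewrite lt_min hN andbT; apply: lt_le_trans hlS (hS 0%N).
have hin : Fset A w' (inf (fidS A w' psi c')) by exists psi, c'; split.
apply: lt_le_trans hmu _; apply: le_trans (Fset_sup _ _ _ hin).
apply: lb_le_inf; first by exists (sqmod (inner psi (drun A w' psi c' (c' 0%N)))), 0%N.
move=> y [[|i] ->].
- by rewrite /c' mul0n addn0 f0 ge_min lexx.
- by rewrite fi ge_min lexx orbT.
Qed.
End TLsec.
Section Concrete.
Local Unset Implicit Arguments.
Variable R : realType.
Local Notation C := (R[i]).

Definition ev (k : 'I_2) : 'cV[C]_2 := delta_mx k 0.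
Definition sig (q : bool) : 'S_2 := if q then tperm ord0 ord_max else 1%g.
Definition Um (q : bool) : 'M[C]_2 := perm_mx (sig q).

Lemma sqmodM (x y : C) : sqmod (x * y) = sqmod x * sqmod y.
Proof. case: x => a b; case: y => c d; rewrite /sqmod /=; ring. Qed.
Lemma sqmodJ (x : C) : sqmod (x^*) = sqmod x.
Proof. case: x => a b; rewrite /sqmod /=; ring. Qed.
Lemma sqmod1 : sqmod (1 : C) = 1.
Proof. rewrite /sqmod /=; ring. Qed.
Lemma sqmod0 : sqmod (0 : C) = 0.
Proof. rewrite /sqmod /=; ring. Qed.

Lemma adj_perm n (s : 'S_n) : adj (perm_mx s : 'M[C]_n) = perm_mx s^-1.
Proof. by rewrite /adj map_perm_mx tr_perm_mx. Qed.

Lemma Um_unitary q : unitary (Um q).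
Proof.
by rewrite /unitary /Um adj_perm -!perm_mxM mulgV mulVg perm_mx1.
Qed.

Lemma inner_ev (j k : 'I_2) : inner (ev j) (ev k) = (j == k)%:R.
Proof.
rewrite /inner /adj /ev map_delta_mx trmx_delta mul_delta_mx_cond.
by case: (j == k); rewrite ?scale1r ?scale0r !mxE ?eqxx.
Qed.

Lemma ev_unit k : unit_vec (ev k).
Proof.
rewrite /unit_vec -/(nrm _); apply: complexI; rewrite -inner_nrm inner_ev eqxx //.
Qed.

Lemma perm_ev n (s : 'S_n) k : (perm_mx s : 'M[C]_n) *m (delta_mx k 0 : 'cV[C]_n) = delta_mx (s^-1%g k) 0.
Proof.
apply/matrixP => i z; rewrite -colE !mxE (ord1 z) /= eqxx andbT.
have -> : (s i == k) = (i == s^-1%g k); last by [].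
apply/eqP/eqP => h; first by rewrite -h permK.
by rewrite h permKV.
Qed.

Definition step (q : bool) (k : 'I_2) : 'I_2 := (sig q)^-1%g k.

Lemma Um_ev q k : Um q *m ev k = ev (step q k).
Proof. exact: perm_ev. Qed.

Lemma step_false k : step false k = k.
Proof. by rewrite /step /sig invg1 perm1. Qed.
Lemma step_true k : step true k = tperm ord0 ord_max k.
Proof. by rewrite /step /sig tpermV. Qed.

Lemma ord2_other (x j : 'I_2) : x != j -> tperm ord0 ord_max x = j.
Proof.
have h : forall y : 'I_2, y = ord0 \/ y = ord_max.
  by case=> [[|[|//]]] hy; [left|right]; apply: val_inj.
by case: (h x) => ->; case: (h j) => ->; rewrite ?eqxx // ?tpermL ?tpermR.
Qed.

Lemma in_F_ev (j : 'I_2) (psi : 'cV[C]_2) : (psi^T <= delta_mx j j)%MS -> psi = psi j 0 *: ev j.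
Proof.
move/submxP => [D hD].
have h0 : forall i, i != j -> psi i 0 = 0.
  move=> i nij; have := congr1 (fun M : 'M[C]_(1,2) => M 0 i) hD; rewrite !mxE => ->.
  by rewrite big1 // => l _; rewrite !mxE (negbTE nij) andbF mulr0.
apply/matrixP => i z; rewrite (ord1 z) !mxE eqxx andbT.
case: (eqVneq i j) => [->|nij]; [by rewrite mulr1 | by rewrite mulr0 h0].
Qed.

End Concrete.
Section Concrete2.
Local Unset Implicit Arguments.
Variable R : realType.
Local Notation C := (R[i]).

Definition Aut (j : 'I_2) : qautomaton R bool :=
  @QAutomaton R bool 2 (ev R ord0) (Um R) (delta_mx j j) (ev_unit R ord0) (Um_unitary R).

Fixpoint P (w : oword bool) n : 'I_2 :=
  match n with 0 => ord0 | m.+1 => step (w m) (P w m) end.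

Lemma Ginv j w (psi : 'cV[C]_2) c (al : C) : psi = al *: ev R j ->
  forall n, (forall i, (c i < n)%N -> P w (c i) = j) ->
  exists be : C, (be = 1 \/ be = al) /\ drun (Aut j) w psi c n = be *: ev R (P w n).
Proof.
move=> hpsi; elim=> [|n IH] H.
  by exists 1; split; [left | rewrite scale1r].
rewrite drunS; destruct (pselect _) as [[i hi]|hn]; cbn iota beta delta [is_left].
- have hPj : P w n = j by rewrite -hi; apply: H; rewrite hi.
  exists al; split; first by right.
  by rewrite hpsi -scalemxAr /= Um_ev hPj.
- have [be [hbe IH']] : exists be : C, (be = 1 \/ be = al) /\ drun (Aut j) w psi c n = be *: ev R (P w n).
    by apply: IH => i hi; apply: H; apply: ltnW.
  exists be; split => //.
  by rewrite IH' -scalemxAr /= Um_ev.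
Qed.

Lemma fid_ev j k (al be : C) : sqmod al = 1 -> (be = 1 \/ be = al) ->
  sqmod (inner (al *: ev R j) (be *: ev R k)) = if j == k then 1 else 0.
Proof.
move=> ha hb; rewrite innerZl innerZr inner_ev.
case: (j == k); last by rewrite mulr0 mulr0 sqmod0.
rewrite mulr1 sqmodM sqmodJ ha mul1r.
by case: hb => ->; rewrite ?sqmod1.
Qed.

Lemma chk_ge c : checkpoints c -> forall i, (i <= c i)%N.
Proof. move=> hc; elim=> // i IH; exact: leq_ltn_trans IH (hc i). Qed.

Lemma chk_inv c : checkpoints c -> forall i k, (c i < c k)%N -> (i < k)%N.
Proof.
move=> hc i k h; rewrite ltnNge; apply/negP => hki.
by move: (chk_mono c hc k i hki); rewrite leqNgt h.
Qed.

Lemma P_false w m : (forall n, (m <= n)%N -> w n = false) -> forall k, P w (m + k) = P w m.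
Proof.
move=> hw; elim=> [|k IH]; first by rewrite addn0.
by rewrite addnS /= hw ?step_false ?IH //; lia.
Qed.

Lemma P_true w m : (forall n, (m <= n)%N -> w n = true) -> forall k,
  P w (m + k) = if odd k then tperm ord0 ord_max (P w m) else P w m.
Proof.
move=> hw; elim=> [|k IH]; first by rewrite addn0.
rewrite addnS /= hw; last lia.
by rewrite step_true IH /=; case: (odd k) => //=; rewrite tpermK.
Qed.

Lemma zeroL j w m (lam : R) : 0 <= lam -> (forall n, (m <= n)%N -> w n = false) ->
  P w m != j -> fD (Aut j) w <= lam.
Proof.
move=> l0 hw hP.
suff ub : ubound (Fset R bool (Aut j) w) 0.
  rewrite fDE; have [hs|hns] := pselect (has_sup (Fset R bool (Aut j) w)).
  - by apply: le_trans l0; apply: ge_sup => //; case: hs.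
  - by rewrite sup_out.
move=> x [psi [c [hF hU hc ->]]].
have hpsi := in_F_ev R j psi hF.
have hal : sqmod (psi j 0) = 1.
  apply: complexI; move: hU; rewrite /unit_vec -/(nrm _) => hU.
  have e1 : inner psi psi = (psi j 0)^* * psi j 0.
    by rewrite {1 2}hpsi innerZl innerZr inner_ev eqxx mulr1.
  by rewrite sqmodE -e1 inner_nrm hU.
have [[i hi]|hall] := pselect (exists i, sqmod (inner psi (drun (Aut j) w psi c (c i))) = 0).
  rewrite -hi; apply: (ge_inf (fidS_lb R bool (Aut j) w psi c)); by exists i.
exfalso.
have allj : forall i, P w (c i) = j.
  elim/ltn_ind => i IHi.
  have [be [hbe hd]] := Ginv j w psi c (psi j 0) hpsi (c i) (fun i' h => IHi i' (chk_inv c hc i' i h)).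
  case: (eqVneq (P w (c i)) j) => // hne; exfalso; apply: hall; exists i.
  by rewrite hd {1}hpsi fid_ev // eq_sym (negbTE hne).
have := allj m; rewrite -(subnKC (chk_ge c hc m)) P_false //.
by move/eqP; rewrite (negbTE hP).
Qed.

Lemma posL j w m (lam : R) : lam < 1 -> (forall n, (m <= n)%N -> w n = true) ->
  lam < fD (Aut j) w.
Proof.
move=> l1 hw.
pose c := fun i => (m + ((P w m != j) + i.*2))%N.
have hc : checkpoints c by move=> i; rewrite /c doubleS; lia.
have hPc : forall i, P w (c i) = j.
  move=> i; rewrite /c P_true // oddD odd_double addbF.
  case: (eqVneq (P w m) j) => [->|hne] //=.
  exact: ord2_other.
have hpsi : ev R j = 1 *: ev R j by rewrite scale1r.
have hF : in_F (A := Aut j) (ev R j).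
  rewrite /in_F /= /ev trmx_delta; apply/submxP; exists (delta_mx 0 j).
  by rewrite mul_delta_mx.
have hin : Fset R bool (Aut j) w (inf (fidS R bool (Aut j) w (ev R j) c)).
  by exists (ev R j), c; split => //; exact: (ev_unit R j).
apply: lt_le_trans l1 _; apply: le_trans (Fset_sup R bool (Aut j) w _ hin).
apply: lb_le_inf; first by exists (sqmod (inner (ev R j) (drun (Aut j) w (ev R j) c (c 0%N)))), 0%N.
move=> y [i ->].
have [be [hbe hd]] := Ginv j w (ev R j) c 1 hpsi (c i) (fun i' _ => hPc i').
rewrite hd {1}hpsi fid_ev ?sqmod1 // ?hPc ?eqxx //.
Qed.

End Concrete2.
Unset Implicit Arguments.

Theorem theorem11 (R : realType) (lam : R) (hlam : 0 <= lam < 1) :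
  (exists (Sigma : finType) (L1 L2 : set (oword Sigma)),
      QBA_D Sigma lam L1 /\ QBA_D Sigma lam L2 /\ ~ QBA_D Sigma lam (L1 `&` L2)) /\
  (exists (Sigma : finType) (L : set (oword Sigma)),
      QBA_D Sigma lam L /\ ~ QBA_D Sigma lam (~` L)).
Proof.
have [l0 l1] := andP hlam.
split.
- exists bool, (langD (Aut R ord0) lam), (langD (Aut R ord_max) lam).
  split; first by exists (Aut R ord0).
  split; first by exists (Aut R ord_max).
  move=> [B hB].
  have hbw : langD B lam (fun _ => true).
    by rewrite -hB; split; apply: (posL R _ _ 0%N lam l1).
  have [m hm] := TL R bool B lam false (fun _ => true) hlam hbw.
  set w' := fun n => if (n < m)%N then true else false in hm.
  have hw' : forall n, (m <= n)%N -> w' n = false.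
    by move=> n hn; rewrite /w' ltnNge hn.
  have : langD B lam w' := hm.
  rewrite -hB => -[h1 h2].
  case: (eqVneq (P w' m) ord0) => hP.
  + have hP' : P w' m != ord_max by rewrite hP.
    have := zeroL R ord_max w' m lam l0 hw' hP'.
    by move: h2; rewrite /langD /=; lra.
  + have := zeroL R ord0 w' m lam l0 hw' hP.
    by move: h1; rewrite /langD /=; lra.
- exists bool, (langD (Aut R ord0) lam); split; first by exists (Aut R ord0).
  move=> [B hB].
  pose w0 := fun n : nat => n == 0%N.
  have h0 : (~` langD (Aut R ord0) lam) w0.
    move=> /= h.
    have hw0 : forall n, (1 <= n)%N -> w0 n = false by case.
    have hP0 : P w0 1 != ord0 by rewrite /= step_true tpermL.
    have := zeroL R ord0 w0 1 lam l0 hw0 hP0.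
    by move: h; rewrite /langD /=; lra.
  rewrite hB in h0.
  have [m hm] := TL R bool B lam true w0 hlam h0.
  set w' := fun n => if (n < m)%N then w0 n else true in hm.
  have : langD B lam w' := hm.
  rewrite -hB => /= h; apply: h.
  apply: (posL R ord0 w' m lam l1) => n hn.
  by rewrite /w' ltnNge hn.
Qed.
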